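(* Let $n\ge k\ge d$ be positive integers and let $G\subseteq\mathbb{Z}[\mathbf{x}_n,\mathbf{y}_d]$ be the set consisting of $h_r(\mathbf{y}_d)$ for all $r>k-d$; $e_r(\mathbf{x}_n) - e_{r-1}(\mathbf{x}_n)h_1(\mathbf{y}_d)+\cdots+(-1)^r h_r(\mathbf{y}_d)$ for all $r>n-d$; and $x_i^d - x_i^{d-1}e_1(\mathbf{y}_d)+\cdots+(-1)^d e_d(\mathbf{y}_d)$ for $i=1,\dots,n$. Let $J_{n,k,d}\subseteq\mathbb{Z}[\mathbf{x}_n,\mathbf{y}_d]$ be the ideal generated by $G$. If $f\in J_{n,k,d}\cap\mathbb{Z}[\mathbf{x}_n,\mathbf{y}_d]^{\mathfrak{S}_d}$, then $d!\cdot f$ lies in the ideal of $\mathbb{Z}[\mathbf{x}_n,\mathbf{y}_d]^{\mathfrak{S}_d}$ generated by $G$.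
   Context: $\mathbf{x}_n=(x_1,\dots,x_n)$, $\mathbf{y}_d=(y_1,\dots,y_d)$; $\mathfrak{S}_d$ acts by permuting the $y$-variables. $e_r,h_r$ are elementary and complete homogeneous symmetric polynomials ($e_0=h_0=1$, $e_r=0$ when $r$ exceeds the number of variables). *)

(* Defs.v *)
From HB Require Import structures.
From mathcomp Require Import all_boot all_order all_algebra all_fingroup.
From mathcomp Require Import mpoly.
Set Implicit Arguments. Unset Strict Implicit. Unset Printing Implicit Defensive.
Import GRing.Theory.
Local Open Scope ring_scope.

(* The ring Z[x_1..x_n, y_1..y_d] is {mpoly int[n + d]}:
   variable index (lshift d i) is x_(i+1), index (rshift n j) is y_(j+1). *)
Section Defs.
Variables n d : nat.
Local Notation P := {mpoly int[n + d]}.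

Definition xv (i : 'I_n) : P := 'X_(lshift d i).
Definition yv (j : 'I_d) : P := 'X_(rshift n j).

Definition ex (r : nat) : P :=
  \sum_(S : {set 'I_n} | #|S| == r) \prod_(i in S) xv i.
Definition ey (r : nat) : P :=
  \sum_(S : {set 'I_d} | #|S| == r) \prod_(j in S) yv j.
Definition hy (r : nat) : P :=
  \sum_(t : r.-tuple 'I_d | sorted (fun a b : 'I_d => (a <= b)%N) t)
     \prod_(j <- t) yv j.

Definition gE (r : nat) : P :=
  \sum_(j < r.+1) (-1) ^+ j * ex (r - j) * hy j.
Definition gX (i : 'I_n) : P :=
  \sum_(j < d.+1) (-1) ^+ j * xv i ^+ (d - j) * ey j.

Definition Gset (k : nat) (g : P) : Prop :=
  (exists2 r : nat, (k - d < r)%N & g = hy r) \/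
  (exists2 r : nat, (n - d < r)%N & g = gE r) \/
  (exists i : 'I_n, g = gX i).

Definition yperm (s : 'S_d) (v : 'I_(n + d)) : 'I_(n + d) :=
  match split v with
  | inl a => lshift d a
  | inr b => rshift n (s b)
  end.
Definition yact (s : 'S_d) (p : P) : P :=
  mmap (@mpolyC _ int) (fun v => 'X_(yperm s v)) p.

Definition ysym (p : P) : Prop := forall s : 'S_d, yact s p = p.

(* membership of f in the ideal, of the subring {p | A p}, generated by G:
   f is a finite sum of c * g with A c and G g *)
Definition in_ideal_of (A G : P -> Prop) (f : P) : Prop :=
  exists cs : seq (P * P),
    (forall c, c \in cs -> A c.1 /\ G c.2) /\ f = \sum_(c <- cs) c.1 * c.2.
End Defs.

(* Main.v *)
Require Import Defs.
From HB Require Import structures.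
From mathcomp Require Import all_boot all_order all_algebra all_fingroup.
From mathcomp Require Import mpoly.
Local Open Scope ring_scope.
Set Implicit Arguments. Unset Strict Implicit. Unset Printing Implicit Defensive.
Import GRing.Theory.

Section Aux.
Variables n d : nat.
Local Notation P := {mpoly int[n + d]}.

Lemma split_l (i : 'I_n) : split (lshift d i) = inl i.
Proof. exact: (unsplitK (inl _ i)). Qed.
Lemma split_r (j : 'I_d) : split (rshift n j) = inr j.
Proof. exact: (unsplitK (inr _ j)). Qed.

Lemma yperm_inj (s : 'S_d) : injective (@yperm n d s).
Proof.
move=> u v; rewrite /yperm.
case: (split_ordP u) => [a ->|b ->]; case: (split_ordP v) => [a' ->|b' ->];
  rewrite ?split_l ?split_r.
- by move/lshift_inj => ->.
- by move/(congr1 val) => /= H; have := ltn_ord a; rewrite H ltnNge leq_addr.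
- by move/(congr1 val) => /= H; have := ltn_ord a'; rewrite -H ltnNge leq_addr.
- by move/rshift_inj/perm_inj => ->.
Qed.

Definition ys (s : 'S_d) : 'S_(n + d) := perm (@yperm_inj s).

Lemma ysM (s t : 'S_d) : ys (s * t)%g = (ys s * ys t)%g.
Proof.
apply/permP => v; rewrite permM !permE /yperm.
case: (split_ordP v) => [a _|b _]; rewrite ?split_l ?split_r //.
rewrite permM; by [].
Qed.

Lemma yact_msym (s : 'S_d) (p : P) : yact s p = msym (ys s) p.
Proof.
rewrite /yact /msym /mmap; apply: eq_bigr => m _; congr (_ * _).
by apply: mmap1_eq => v; rewrite permE.
Qed.

Lemma yactMm (s t : 'S_d) (p : P) : yact t (yact s p) = yact (s * t)%g p.
Proof. by rewrite !yact_msym ysM msymMm. Qed.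

Lemma yactX (s : 'S_d) v : yact s ('X_v : P) = 'X_(yperm s v).
Proof. by rewrite /yact mmapX mmap1U. Qed.

Lemma yact_xv (s : 'S_d) i : yact s (@xv n d i) = @xv n d i.
Proof. by rewrite /xv yactX /yperm split_l. Qed.

Lemma yact_yv (s : 'S_d) j : yact s (@yv n d j) = @yv n d (s j).
Proof. by rewrite /yv yactX /yperm split_r. Qed.


Lemma yact_ex (s : 'S_d) r : yact s (ex n d r) = ex n d r.
Proof.
rewrite yact_msym /ex rmorph_sum; apply: eq_bigr => S _.
rewrite rmorph_prod /=; apply: eq_bigr => i _; by rewrite -yact_msym yact_xv.
Qed.

Lemma yact_ey (s : 'S_d) r : yact s (ey n d r) = ey n d r.
Proof.
rewrite yact_msym /ey rmorph_sum /=.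
transitivity (\sum_(S : {set 'I_d} | #|S| == r)
                \prod_(j in [set s x | x in S]) @yv n d j).
  apply: eq_bigr => S _; rewrite rmorph_prod big_imset /=.
    by apply: eq_bigr => j _; rewrite -yact_msym yact_yv.
  by move=> x y _ _; apply: perm_inj.
rewrite [RHS](reindex (fun S : {set 'I_d} => [set s x | x in S])) /=.
  by apply: eq_bigl => S; rewrite card_imset //; exact: perm_inj.
exists (fun S : {set 'I_d} => [set (s^-1)%g x | x in S]) => S _.
  by rewrite -imset_comp (eq_imset _ (permK s)) imset_id.
by rewrite -imset_comp (eq_imset _ (permKV s)) imset_id.
Qed.


Local Notation ordle := (fun a b : 'I_d => (a <= b)%N).

Lemma ordle_total : total ordle.
Proof. by move=> a b; apply: leq_total. Qed.
Lemma ordle_trans : transitive ordle.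
Proof. by move=> b a c; apply: leq_trans. Qed.
Lemma ordle_anti : antisymmetric ordle.
Proof. by move=> a b H; apply: val_inj; apply: anti_leq. Qed.

Lemma psort_size (s : 'S_d) r (t : r.-tuple 'I_d) :
  size (sort ordle (map s t)) == r.
Proof. by rewrite size_sort size_map size_tuple. Qed.

Definition psort (s : 'S_d) r (t : r.-tuple 'I_d) : r.-tuple 'I_d :=
  Tuple (psort_size s t).

Lemma psortK (s : 'S_d) r (t : r.-tuple 'I_d) :
  sorted ordle t -> psort s^-1 (psort s t) = t.
Proof.
move=> Ht; apply: val_inj => /=.
rewrite -[RHS](sorted_sort ordle_trans Ht).
apply/(perm_sortP ordle_total ordle_trans ordle_anti).
have E : val t = map (s^-1)%g (map s t).
  by rewrite -map_comp (eq_map (permK s)) map_id.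
rewrite {2}E.
by apply: perm_map; rewrite perm_sort.
Qed.

Lemma yact_hy (s : 'S_d) r : yact s (hy n d r) = hy n d r.
Proof.
rewrite yact_msym /hy rmorph_sum /=.
transitivity (\sum_(t : r.-tuple 'I_d | sorted ordle t)
                \prod_(j <- psort s t) @yv n d j).
  apply: eq_bigr => t _; rewrite rmorph_prod /=.
  rewrite /psort /= [RHS](perm_big _ (permEl (perm_sort ordle (map s t)))) /=.
  by rewrite big_map; apply: eq_bigr => j _; rewrite -yact_msym yact_yv.
rewrite [RHS](reindex_onto (@psort s r) (@psort (s^-1)%g r)) /=.
  apply: eq_bigl => t; apply/idP/idP.
    move=> Ht; rewrite psortK // eqxx andbT; exact: sort_sorted ordle_total _.
  by case/andP => _ /eqP <-; exact: sort_sorted ordle_total _.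
by move=> t Ht; have := psortK (s^-1)%g Ht; rewrite invgK.
Qed.


Lemma yactM (s : 'S_d) (p q : P) : yact s (p * q) = yact s p * yact s q.
Proof. by rewrite !yact_msym rmorphM. Qed.
Lemma yactXn (s : 'S_d) (p : P) m : yact s (p ^+ m) = yact s p ^+ m.
Proof. by rewrite !yact_msym rmorphXn. Qed.
Lemma yactN1 (s : 'S_d) : yact s (-1 : P) = -1.
Proof. by rewrite !yact_msym rmorphN1. Qed.
Lemma yact_sum (s : 'S_d) (I : Type) (r : seq I) (Q : pred I) (F : I -> P) :
  yact s (\sum_(i <- r | Q i) F i) = \sum_(i <- r | Q i) yact s (F i).
Proof.
rewrite yact_msym rmorph_sum; apply: eq_bigr => i _; by rewrite yact_msym.
Qed.

Lemma yact_gE (s : 'S_d) r : yact s (gE n d r) = gE n d r.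
Proof.
rewrite /gE yact_sum; apply: eq_bigr => j _.
by rewrite !yactM yactXn yactN1 yact_ex yact_hy.
Qed.

Lemma yact_gX (s : 'S_d) i : yact s (@gX n d i) = @gX n d i.
Proof.
rewrite /gX yact_sum; apply: eq_bigr => j _.
by rewrite !yactM !yactXn yactN1 yact_xv yact_ey.
Qed.

Lemma Gsym k g : @Gset n d k g -> forall s : 'S_d, yact s g = g.
Proof.
case=> [[r _ ->]|[[r _ ->]|[i ->]]] s.
- exact: yact_hy.
- exact: yact_gE.
- exact: yact_gX.
Qed.

End Aux.

Theorem lemma4p10 (n k d : nat) (hd : (0 < d)%N) (hdk : (d <= k)%N)
  (hkn : (k <= n)%N) (f : {mpoly int[n + d]}) :
  in_ideal_of (fun _ => True) (@Gset n d k) f ->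
  ysym f ->
  in_ideal_of (@ysym n d) (@Gset n d k) (f *+ d`!).
Proof.
move=> [cs [Hcs Ef]] Hf.
pose sy (p : {mpoly int[n + d]}) := \sum_(s : 'S_d) yact s p.
exists [seq (sy c.1, c.2) | c <- cs]; split.
  move=> c /mapP [c0 Hc0 ->] /=; split; last by case: (Hcs _ Hc0).
  move=> t; rewrite /sy yact_msym rmorph_sum /=.
  transitivity (\sum_(s : 'S_d) yact (s * t)%g c0.1).
    by apply: eq_bigr => s _; rewrite -yact_msym yactMm.
  by rewrite [RHS](reindex_inj (mulIg t)).
rewrite big_map /=.
transitivity (\sum_(s : 'S_d) yact s f).
  by rewrite (eq_bigr (fun=> f)) ?sumr_const ?card_Sn // => s _; rewrite Hf.
rewrite Ef.
rewrite (eq_bigr (fun s => \sum_(c <- cs) yact s (c.1 * c.2))); last by move=> s _; rewrite yact_sum.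
rewrite exchange_big /= [LHS]big_seq [RHS]big_seq; apply: eq_bigr => c Hc.
rewrite /sy mulr_suml; apply: eq_bigr => s _.
by rewrite yactM (Gsym (Hcs c Hc).2).
Qed.
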